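(* Let $(A,\mathfrak m)$ be a local integral domain which is not a valuation domain, let $E := A/\mathfrak m$, and let $B := A \ltimes E$ be the trivial ring extension of $A$ by $E$. Let $f : A \to B$ be the ring homomorphism $f(a) = (a,0)$ and let $J := 0 \ltimes E$, a proper ideal of $B$. Then: (1) $J \not\subseteq f(A)$; (2) $f(\mathrm{Reg}(A)) \neq \mathrm{Reg}(B)$; (3) $A$ is not a Prüfer ring; (4) $A \bowtie^f J$ is a Prüfer ring.
   Context: All rings are commutative with identity. For an $A$-module $E$, the trivial ring extension $A\ltimes E$ is the ring $A\times E$ with multiplication $(a,e)(a',e')=(aa',ae'+a'e)$. For a ring homomorphism $f:A\to B$ and an ideal $J$ of $B$, $A \bowtie^f J := \{(a, f(a)+j) : a \in A, j \in J\}$, a subring of $A\times B$. $\mathrm{Reg}(R)$ is the set of regular elements (non-zero-divisors) of $R$. An ideal is regular if it contains a regular element. A ring $R$ is a Prüfer ring if every finitely generated regular ideal of $R$ is invertible. *)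

(* Defs.v *)
From HB Require Import structures.
From mathcomp Require Import all_boot all_algebra.
Set Implicit Arguments. Unset Strict Implicit. Unset Printing Implicit Defensive.
Import GRing.Theory.
Local Open Scope ring_scope.

Section TrivExt.
Variables (A : comNzRingType) (E : lmodType A).

Definition triv_ext : Type := (A * E)%type.
HB.instance Definition _ := GRing.Zmodule.on triv_ext.

Definition te_one : triv_ext := (1, 0).
Definition te_mul (x y : triv_ext) : triv_ext :=
  (x.1 * y.1, x.1 *: y.2 + y.1 *: x.2).

Fact te_mulA : associative te_mul.
Proof.
move=> [a e] [b f] [c g]; rewrite /te_mul /=; congr pair; first by rewrite mulrA.
rewrite !scalerDr !scalerA -!addrA; congr (_ + _).
by rewrite [c * a]mulrC [c * b]mulrC.
Qed.

Fact te_mulC : commutative te_mul.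
Proof. by move=> [a e] [b f]; rewrite /te_mul /= mulrC addrC. Qed.

Fact te_mul1 : left_id te_one te_mul.
Proof. by move=> [a e]; rewrite /te_mul /= mul1r scaler0 scale1r addr0. Qed.

Fact te_mulDl : left_distributive te_mul +%R.
Proof.
move=> [a e] [b f] [c g]; rewrite /te_mul /=; congr pair; first by rewrite mulrDl.
by rewrite scalerDl scalerDr !addrA; congr (_ + _); rewrite -!addrA; congr (_ + _);
  rewrite addrC.
Qed.

Fact te_one_neq0 : te_one != 0.
Proof. by rewrite /te_one xpair_eqE oner_eq0. Qed.

HB.instance Definition _ := GRing.Zmodule_isComNzRing.Build triv_ext
  te_mulA te_mulC te_mul1 te_mulDl te_one_neq0.

End TrivExt.

(* Ring-theoretic notions, stated relative to a subring S of a          *)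
(* commutative ring T (S given as a predicate); for a ring R itself     *)
(* take S := fun _ => True.                                             *)
Section SubringNotions.
Variables (T : comNzRingType) (S : T -> Prop).

Definition regular_in (x : T) : Prop :=
  S x /\ forall y, S y -> x * y = 0 -> y = 0.

Definition ideal_in (I : T -> Prop) : Prop :=
  (forall x, I x -> S x) /\ I 0 /\ (forall x y, I x -> I y -> I (x + y)) /\
  (forall r x, S r -> I x -> I (r * x)).

Definition gen_ideal_in (s : seq T) (x : T) : Prop :=
  exists c : nat -> T, (forall i, S (c i)) /\ x = \sum_(i < size s) c i * s`_i.

Definition prod_ideal (I J : T -> Prop) (x : T) : Prop :=
  exists (n : nat) (u v : nat -> T),
    (forall i, I (u i) /\ J (v i)) /\ x = \sum_(i < n) u i * v i.

(* I is invertible: there is a fractional ideal I' (in the total ring of *)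
(* fractions) with I I' = S.  Written, without fractions, as: there are  *)
(* an ideal J of S and a regular d with I J = d S  (I' = d^-1 J).        *)
Definition invertible_in (I : T -> Prop) : Prop :=
  exists (J : T -> Prop) (d : T), ideal_in J /\ regular_in d /\
    forall x, prod_ideal I J x <-> exists r, S r /\ x = d * r.

Definition prufer_in : Prop :=
  forall s : seq T, (forall i, (i < size s)%N -> S s`_i) ->
    (exists x, gen_ideal_in s x /\ regular_in x) ->
    invertible_in (gen_ideal_in s).

End SubringNotions.

Definition regular (R : comNzRingType) (x : R) := regular_in (fun _ => True) x.
Definition prufer_ring (R : comNzRingType) := prufer_in (fun _ : R => True).

Definition local_ring (A : comUnitRingType) : Prop :=
  forall x y : A, x \isn't a GRing.unit -> y \isn't a GRing.unit ->
    x + y \isn't a GRing.unit.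

(* valuation domain: for a, b <> 0, a/b or b/a lies in A, i.e. a | b or b | a *)
Definition valuation_domain (A : idomainType) : Prop :=
  forall a b : A, (exists c, b = c * a) \/ (exists c, a = c * b).

Definition amalg (A B : comNzRingType) (f : A -> B) (J : B -> Prop)
  (x : A * B) : Prop :=
  exists a j, J j /\ x = (a, f a + j).

(* Main.v *)
Require Import Defs.
From HB Require Import structures.
From mathcomp Require Import all_boot all_algebra.
From mathcomp Require Import ring.
From Stdlib Require Import Classical.
Import GRing.Theory.
Local Open Scope ring_scope.

Lemma sum_closed (T : comNzRingType) (P : T -> Prop) (P0 : P 0)
  (PD : forall x y, P x -> P y -> P (x + y)) n (F : nat -> T) :
  (forall i, (i < n)%N -> P (F i)) -> P (\sum_(i < n) F i).
Proof.
elim: n => [|n IH] H; first by rewrite big_ord0.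
rewrite big_ord_recr /=; apply: PD; last exact: H.
by apply: IH => i Hi; apply: H; apply: ltnW.
Qed.

Section Part3.
Variables (A : idomainType) (hloc : local_ring A).

Lemma gen2 (a b x y : A) : gen_ideal_in (fun _ => True) [:: a; b] (x * a + y * b).
Proof.
exists (fun i => if i == 0%N then x else y); split => //.
by rewrite big_ord_recr big_ord_recr big_ord0 /= add0r.
Qed.

Lemma decomp (a b : A) (J : A -> Prop) : ideal_in (fun _ => True) J ->
  forall n (u v : nat -> A),
  (forall i, gen_ideal_in (fun _ => True) [:: a; b] (u i) /\ J (v i)) ->
  exists al be, J al /\ J be /\ \sum_(i < n) u i * v i = a * al + b * be.
Proof.
move=> [_ [J0 [JD JM]]]; elim=> [|n IH] u v Huv.
  by exists 0, 0; rewrite big_ord0 !mulr0 addr0.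
rewrite big_ord_recr /=.
have [al [be [Ja [Jb ->]]]] := IH u v Huv.
have [[c [_ Hc]] Jv] := Huv n.
move: Hc; rewrite big_ord_recr big_ord_recr big_ord0 /= add0r => Hc.
exists (al + c 0%N * v n), (be + c 1%N * v n); split; first by apply: JD => //; apply: JM.
split; first by apply: JD => //; apply: JM.
rewrite Hc; ring.
Qed.

Lemma prod1 (I J : A -> Prop) x y : I x -> J y -> prod_ideal I J (x * y).
Proof.
move=> Ix Jy; exists 1%N, (fun _ => x), (fun _ => y); split => //.
by rewrite big_ord_recr big_ord0 /= add0r.
Qed.
Arguments prod1 {I J x y}.

Lemma not_prufer (a b : A) : ~ (exists c, b = c * a) -> ~ (exists c, a = c * b) ->
  ~ prufer_ring A.
Proof.
move=> Hab Hba Hpr.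
have a0 : a != 0.
  by apply/eqP => a0; apply: Hba; exists 0; rewrite a0 mul0r.
have [] := Hpr [:: a; b] (fun _ _ => I).
  exists a; split.
    by have := gen2 a b 1 0; rewrite mul1r mul0r addr0.
  split=> //; move=> y _ /eqP; rewrite mulf_eq0 (negbTE a0) /=.
  by move/eqP.
move=> J [d [HJ [[_ Hd] Heq]]].
have d0 : d != 0.
  apply/eqP => d0; have := Hd 1 I; rewrite d0 mul0r => /(_ erefl) /eqP.
  by rewrite oner_eq0.
have [n [u [v [Huv Hdsum]]]] := (proj2 (Heq d)) (ex_intro _ 1 (conj I (esym (mulr1 d)))).
have [al [be [Ja [Jb Hd2]]]] := @decomp a b J HJ n u v Huv.
have Ga : gen_ideal_in (fun _ => True) [:: a; b] a.
  by have := gen2 a b 1 0; rewrite mul1r mul0r addr0.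
have Gb : gen_ideal_in (fun _ => True) [:: a; b] b.
  by have := gen2 a b 0 1; rewrite mul1r mul0r add0r.
have [r1 [_ Hr1]] := (proj1 (Heq _)) (prod1 Ga Ja).
have [r2 [_ Hr2]] := (proj1 (Heq _)) (prod1 Gb Jb).
have Hr : r1 + r2 = 1.
  apply: (mulfI d0); rewrite mulrDr -Hr1 -Hr2 -Hd2 -Hdsum; ring.
case: (boolP (r1 \is a GRing.unit)) => u1.
  have [s [_ Hs]] := (proj1 (Heq _)) (prod1 Gb Ja).
  have al0 : al != 0.
    apply/eqP => al0; move: Hr1; rewrite al0 mulr0 => /esym/eqP.
    rewrite mulf_eq0 (negbTE d0) /= => /eqP r10; move: u1; rewrite r10.
    by rewrite unitr0.
  have E1 : b * r1 = a * s.
    apply: (mulfI al0).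
    have -> : al * (b * r1) = (b * al) * r1 by ring.
    have -> : al * (a * s) = (a * al) * s by ring.
    by rewrite Hs Hr1; ring.
  apply: Hab; exists (s / r1).
  by rewrite -[b](mulrK u1) E1; ring.
have u2 : r2 \is a GRing.unit.
  case: (boolP (r2 \is a GRing.unit)) => // u2.
  by have := hloc _ _ u1 u2; rewrite Hr unitr1.
have [s [_ Hs]] := (proj1 (Heq _)) (prod1 Ga Jb).
have be0 : be != 0.
  apply/eqP => be0; move: Hr2; rewrite be0 mulr0 => /esym/eqP.
  rewrite mulf_eq0 (negbTE d0) /= => /eqP r20; move: u2; rewrite r20.
  by rewrite unitr0.
have E1 : a * r2 = b * s.
  apply: (mulfI be0).
  have -> : be * (a * r2) = (a * be) * r2 by ring.
  have -> : be * (b * s) = (b * be) * s by ring.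
  by rewrite Hs Hr2; ring.
apply: Hba; exists (s / r2).
by rewrite -[a](mulrK u2) E1; ring.
Qed.

End Part3.

Section Part4.
Variables (A : idomainType) (E : lmodType A) (pi : A -> E).
Hypothesis (hpiZ : forall a x, pi (a * x) = a *: pi x)
  (hpi_ker : forall x, pi x = 0 <-> x \isn't a GRing.unit).

Let S := amalg (fun a : A => ((a, 0) : triv_ext E)) (fun b : triv_ext E => b.1 = 0).

Lemma Schar x : S x <-> x.2.1 = x.1.
Proof.
split.
  by move=> [a [j [Jj ->]]] /=; rewrite Jj addr0.
move: x => [a [a' e]] /= ->; exists a, (0, e); split => //.
have -> : ((a, 0) + (0, e) : triv_ext E) = (a + 0, 0 + e) by []. by rewrite addr0 add0r.
Qed.

Lemma pi1 : pi 1 <> 0.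
Proof. by move/hpi_ker; rewrite unitr1. Qed.

Lemma part4 : prufer_in S.
Proof.
move=> s Hs [w [Hw [Sw Hreg]]].
have Sw' := proj1 (Schar w) Sw.
have uw : w.1 \is a GRing.unit.
  case: (boolP (w.1 \is a GRing.unit)) => // nu.
  pose y : A * triv_ext E := (0, (0, pi 1)).
  have Sy : S y by apply/Schar.
  have : w * y = 0.
    move: Sw' nu; rewrite /y; case: w {Hw Hreg Sw} => [a [a' e]] /= -> nu.
    change (((a * 0, (a * 0, a *: pi 1 + 0 *: e)) : A * triv_ext E) = ((0, (0, 0)) : A * triv_ext E)).
    by rewrite -hpiZ mulr1 (proj2 (hpi_ker a) nu) !mulr0 scale0r addr0.
  move/(Hreg y Sy); rewrite /y => /(congr1 (fun z => z.2.2)) /=.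
  by move=> /pi1.
have SD : forall x y, S x -> S y -> S (x + y).
  by move=> x y /Schar Hx /Schar Hy; apply/Schar => /=; rewrite Hx Hy.
have SM : forall x y, S x -> S y -> S (x * y).
  by move=> x y /Schar Hx /Schar Hy; apply/Schar => /=; rewrite Hx Hy.
have S0 : S 0 by apply/Schar.
exists S, 1; split; first by split => //; split => //; split.
split; first by split; [apply/Schar | move=> y _; rewrite mul1r].
move=> x; split.
  move=> [n [u [v [Huv ->]]]]; exists (\sum_(i < n) u i * v i); split; last by rewrite mul1r.
  apply: (@sum_closed _ S S0 SD n (fun i => u i * v i)) => // i _; have [[c [Hc ->]] Sv] := Huv i.
  apply: (SM) => //; apply: (@sum_closed _ S S0 SD _ (fun j => c j * s`_j)) => // j Hj.
  by apply: (SM) => //; apply: (Hs _ Hj).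
move=> [r [Sr ->]]; rewrite mul1r.
pose w' : A * triv_ext E := (w.1^-1, (w.1^-1, - (w.1^-1 * w.1^-1) *: w.2.2)).
have Sw'' : S w' by apply/Schar.
have ww : w * w' = 1.
  rewrite /w'; clear Sw'' w'.
  move: Sw' uw; case: w {Hw Hreg Sw} => [a [a' e]] /= -> uw.
  change (((a * a^-1, (a * a^-1, a *: (- (a^-1 * a^-1) *: e) + a^-1 *: e)) : A * triv_ext E) = ((1, (1, 0)) : A * triv_ext E)).
  rewrite scalerA mulrN mulrA mulrV // mul1r.
  by rewrite scaleNr addNr.
exists 1%N, (fun _ => w), (fun _ => r * w'); split.
  by move=> _; split => //; apply: (SM).
by rewrite big_ord_recr big_ord0 /= add0r mulrCA ww mulr1.
Qed.

End Part4.

Theorem mainTheorem7 (A : idomainType) (E : lmodType A) (pi : A -> E)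
  (hloc : local_ring A) (hnval : ~ valuation_domain A)
  (hpiD : forall x y, pi (x + y) = pi x + pi y)
  (hpiZ : forall a x, pi (a * x) = a *: pi x)
  (hpi_surj : forall e, exists x, pi x = e)
  (hpi_ker : forall x, pi x = 0 <-> x \isn't a GRing.unit) :
  let B := triv_ext E in
  let f : A -> B := fun a => (a, 0) in
  let J : B -> Prop := fun b => b.1 = 0 in
  [/\ ~ (forall b, J b -> exists a, f a = b),
      ~ (forall b : B, (exists a, regular a /\ f a = b) <-> regular b),
      ~ prufer_ring A
    & prufer_in (amalg f J)].
Proof.
move=> B f J.
have p1 := @pi1 A E pi hpi_ker.
split.
- move=> H; have [a Ha] := H ((0, pi 1) : B) erefl.
  by apply: p1; have := congr1 snd Ha.
- move=> H.
  have Hr : regular ((1, pi 1) : B).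
    split=> //; move=> [y1 y2] _.
    change (((1 * y1, 1 *: y2 + y1 *: pi 1) : B) = ((0, 0) : B) -> ((y1, y2) : B) = ((0, 0) : B)).
    case; rewrite mul1r => y10; rewrite y10 scale0r addr0 scale1r => ->.
    by [] || rewrite y10.
  have [a [_ Ha]] := proj2 (H ((1, pi 1) : B)) Hr.
  by apply: p1; have := congr1 snd Ha.
- move=> Hpr; apply: hnval => a b.
  case: (classic (exists c, b = c * a)) => H1; first by left.
  case: (classic (exists c, a = c * b)) => H2; first by right.
  by case: (@not_prufer A hloc a b H1 H2 Hpr).
- exact: (@part4 A E pi hpiZ hpi_ker).
Qed.
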